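(* Let $c>0$ and let $G$ be an $n$-vertex graph. If $\delta^{(2)}(G)\ge cn$, then $\hat\delta^{(2,2)}(G)\ge 2-1/c$.
   Context: $\delta^{(2)}(G)=\min\{|N(u)\cap N(v)|: u\ne v,\ uv\notin E(G)\}$. $\hat\delta^{(2,2)}(G)$ is the minimum, over all pairs of distinct non-adjacent vertices $u,v$, of the edge density $e(G[N(u)\cap N(v)])/\binom{|N(u)\cap N(v)|}{2}$ of the subgraph induced on their common neighborhood. *)

(* Defs.v *)
From HB Require Import structures.
From mathcomp Require Import all_boot all_order all_algebra.
Set Implicit Arguments. Unset Strict Implicit. Unset Printing Implicit Defensive.
Import Order.TTheory GRing.Theory Num.Theory.
Local Open Scope ring_scope.

Definition simple_graph (T : finType) (e : rel T) : Prop :=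
  symmetric e /\ irreflexive e.

Definition common_nbhd (T : finType) (e : rel T) (u v : T) : {set T} :=
  [set w | e u w && e v w].

Definition induced_edges (T : finType) (e : rel T) (S : {set T}) : nat :=
  #|[set E : {set T} | (E \subset S) &&
       [exists x : T, exists y : T, [&& x != y, e x y & E == [set x; y]]]]|.

(* Edge density e(G[S]) / binom(|S|,2) (MathComp convention x / 0 = 0). *)
Definition induced_density (R : realFieldType) (T : finType) (e : rel T)
  (S : {set T}) : R :=
  (induced_edges e S)%:R / ('C(#|S|, 2)%N)%:R.

Definition min_codeg_ge (R : realFieldType) (T : finType) (e : rel T) (a : R) : Prop :=
  forall u v : T, u != v -> ~~ e u v -> a <= (#|common_nbhd e u v|)%:R.

Definition min_codeg_density_ge (R : realFieldType) (T : finType) (e : rel T) (a : R) : Prop :=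
  forall u v : T, u != v -> ~~ e u v -> a <= induced_density R e (common_nbhd e u v).

(* Main.v *)
Require Import Defs.
From HB Require Import structures.
From mathcomp Require Import all_boot all_order all_algebra.
From mathcomp Require Import zify ring lra.
Import Order.TTheory GRing.Theory Num.Theory.
Local Open Scope ring_scope.

Lemma bin2x (n : nat) : ('C(n,2) * 2 = n * n.-1)%N.
Proof. elim: n => [|n IH] //. rewrite binS bin1 mulnDl IH /=. case: n {IH} => //= n. timeout 15 lia. Qed.

Lemma edges_double (T : finType) (e : rel T) (S : {set T}) :
  symmetric e -> irreflexive e ->
  (2 * induced_edges e S = \sum_(x in S) #|[set y in S | e x y]|)%N.
Proof.
move=> esym eirr.
set Q := fun p : T * T => [&& p.1 \in S, p.2 \in S & e p.1 p.2].
have -> : (\sum_(x in S) #|[set y in S | e x y]| = \sum_(p | Q p) 1)%N.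
  rewrite -(pair_big_dep (fun x => x \in S) (fun x y => (y \in S) && e x y) (fun _ _ => 1%N)) /=.
  apply: eq_bigr => x _; rewrite -sum1_card; apply: eq_bigl => y; by rewrite inE.
set Es := [set E : {set T} | (E \subset S) &&
       [exists x : T, exists y : T, [&& x != y, e x y & E == [set x; y]]]].
rewrite /induced_edges -/Es.
rewrite (partition_big (fun p : T * T => [set p.1; p.2]) (mem Es)); last first.
  case=> x y /and3P [xS yS exy] /=. rewrite inE; apply/andP; split.
    by apply/subsetP => z; rewrite !inE => /orP [/eqP -> | /eqP ->].
  apply/existsP; exists x; apply/existsP; exists y; rewrite exy eqxx !andbT.
  by apply/negP => /eqP xy; move: exy; rewrite xy eirr.
rewrite -sum1_card big_distrr /=; apply: eq_bigr => E.
rewrite inE => /andP [ES /existsP [x /existsP [y /and3P [xy exy /eqP EE]]]].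
rewrite muln1.
have -> : (\sum_(i | Q i && ([set i.1; i.2] == E)) 1 = \sum_(i in [set (x, y); (y, x)]) 1)%N.
  apply: eq_bigl => [[a b]]; rewrite /Q /= !inE EE.
  have xS : x \in S by apply: (subsetP ES); rewrite EE !inE eqxx.
  have yS : y \in S by apply: (subsetP ES); rewrite EE !inE eqxx orbT.
  apply/idP/idP.
  - move=> /andP [/and3P [aS bS eab] /eqP H].
    have ab : a != b by apply/eqP => ab; move: eab; rewrite ab eirr.
    have : a \in [set x; y] by rewrite -H !inE eqxx.
    have : b \in [set x; y] by rewrite -H !inE eqxx orbT.
    rewrite !inE !xpair_eqE.
    move=> Hb Ha; case/orP: Hb => /eqP Eb; case/orP: Ha => /eqP Ea; subst a b;
      rewrite ?eqxx ?andbT ?orbT //; by rewrite eqxx in ab.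
  - rewrite !xpair_eqE => /orP [/andP [/eqP -> /eqP ->] | /andP [/eqP -> /eqP ->]].
      by rewrite xS yS exy eqxx.
    rewrite yS xS esym exy /=; apply/eqP; apply/setP => z; rewrite !inE orbC //.
rewrite sum1_card cards2.
have -> : ((x, y) != (y, x)) = true.
  by rewrite xpair_eqE negb_and xy.
by [].
Qed.

Theorem proposition4p4 (R : realFieldType) (T : finType) (e : rel T) (c : R) :
  simple_graph e -> 0 < c ->
  min_codeg_ge e (c * (#|T|)%:R) ->
  min_codeg_density_ge e (2 - c^-1).
Proof.
move=> [esym eirr] c0 Hcod u v uv nuv.
rewrite /induced_density.
set S := common_nbhd e u v.
set n := #|T|.
set s := #|S|.
have n2 : (2 <= n)%N by have := max_card [set u; v]; rewrite cards2 uv.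
have sn : (s <= n)%N by apply: max_card.
have Hs : c * n%:R <= s%:R := Hcod u v uv nuv.
have dens0 : 0 <= (induced_edges e S)%:R / ('C(s, 2))%:R :> R.
  by rewrite divr_ge0 ?ler0n.
case: (lerP (2 - c^-1) 0) => [h|hpos]; first exact: le_trans dens0.
set ic := c^-1.
have hc : c * ic = 1 by rewrite /ic mulfV // gt_eqF.
have ic0 : 0 < ic by rewrite /ic invr_gt0.
have n2R : 2 <= n%:R :> R by rewrite (ler_nat R 2 n).
have snR : s%:R <= n%:R :> R by rewrite ler_nat.
have c12 : 1 < 2 * c.
  have : 0 < c * (2 - ic) by rewrite mulr_gt0.
  by rewrite mulrBr hc subr_gt0 mulrC.
have c1 : c <= 1 by timeout 15 nra.
have ic1 : 1 <= ic by timeout 15 nra.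
have s2 : (2 <= s)%N.
  rewrite leqNgt; apply/negP => s1.
  have : s%:R <= 1 :> R by rewrite (ler_nat R s 1) -ltnS.
  timeout 15 nra.
set k := 2 - ic.
have ck : c * k = 2 * c - 1 by rewrite /k mulrBr hc (mulrC c).
pose D x := #|[set y in S | e x y]|.
have degb : forall x, x \in S -> (s%:R - 1) * k <= (D x)%:R :> R.
  move=> x xS.
  case: (boolP [exists y, [&& y \in S, y != x & ~~ e x y]]).
  - case/existsP => y /and3P [yS yx nexy].
    have xy : x != y by rewrite eq_sym.
    have := Hcod x y xy nexy.
    have sub : common_nbhd e x y \subset [set y in S | e x y] :|: ~: S.
      apply/subsetP => z; rewrite /common_nbhd in_set => /andP [exz eyz].
      rewrite in_setU in_setC in_set exz andbT.
      by case: (z \in S).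
    have cardle := subset_leq_card sub.
    have cU := cardsU [set y0 in S | e x y0] (~: S).
    have cC := cardsC S.
    have hnat : (#|common_nbhd e x y| + s <= D x + n)%N.
      rewrite /D /n -cC /s.
      move: cardle cU; set a := #|common_nbhd e x y|; set b := #|[set y0 in S | e x y0]|.
      set d := #|~: S|; set f := #|_ :&: _|; set g := #|_ :|: _| => h1 h2.
      have h3 : (a <= b + d)%N by rewrite (leq_trans h1) // h2 leq_subr.
      by rewrite addnCA [(a + _)%N]addnC leq_add2l.
    move: hnat; rewrite -(ler_nat R) !natrD => hR hc2.
    have : c * ((s%:R - 1) * k) <= c * (D x)%:R.
      rewrite mulrA (mulrC c) -mulrA ck; timeout 15 nra.
    by rewrite ler_pM2l.
  - rewrite negb_exists => /forallP H.
    have sub : S :\ x \subset [set y in S | e x y].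
      apply/subsetP => z; rewrite in_setD1 => /andP [zx zS].
      rewrite in_set zS /=.
      by have := H z; rewrite zS zx /= negbK.
    have cardle := subset_leq_card sub.
    have cD := cardsD1 x S; rewrite xS in cD.
    have : (s <= (D x).+1)%N by rewrite /s cD /= add1n ltnS.
    rewrite -(ler_nat R) -addn1 natrD => hR.
    have s1 : 1 <= s%:R :> R by rewrite (ler_nat R 1 s) (ltnW s2).
    timeout 15 nra.
have sumb : (s%:R * ((s%:R - 1) * k)) <= (\sum_(x in S) D x)%:R :> R.
  rewrite natr_sum -[s%:R]/(#|S|%:R) mulr_natl -sumr_const.
  by apply: ler_sum => x xS; apply: degb.
have ed := @edges_double T e S esym eirr.
rewrite -/D in ed.
have Cpos : (0 < 'C(s, 2))%N by rewrite bin_gt0.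
rewrite ler_pdivlMr ?ltr0n //.
have b2 := bin2x s.
have : (2 * induced_edges e S)%:R = ('C(s,2) * 2)%:R * k + ((\sum_(x in S) D x)%:R - s%:R * ((s%:R - 1) * k)) :> R.
  rewrite b2 ed natrM -subn1 natrB; last by rewrite ltnW.
  ring.
rewrite natrM (natrM _ 'C(s,2)).
nra.
Qed.
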